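(* For integers $0\le\ell\le n$, let $K_{n,\ell}$ be the number of fixed points of a uniformly random $\ell$-matching on $\{1,\dots,n\}$. If $n\to\infty$ and $\ell=\ell(n)$ satisfies $\ell/n\to\theta\in[0,1]$, then $K_{n,\ell}$ converges in distribution to a Poisson$(\theta)$ random variable; that is, for every fixed integer $k\ge0$, $$\mathbb P(K_{n,\ell}=k)\longrightarrow e^{-\theta}\frac{\theta^k}{k!}.$$
   Context: An $\ell$-matching on $\{1,\dots,n\}$ is an injection $\sigma:I\hookrightarrow\{1,\dots,n\}$ where $I\subseteq\{1,\dots,n\}$ with $|I|=\ell$; the uniform distribution is over all such pairs $(I,\sigma)$. A fixed point of $\sigma$ is an $i\in I$ with $\sigma(i)=i$. Poisson$(0)$ denotes the point mass at $0$. *)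

(* Defs.v *)
From HB Require Import structures.
From mathcomp Require Import all_boot all_order all_algebra.
From mathcomp Require Import all_classical all_reals all_analysis.
Set Implicit Arguments. Unset Strict Implicit. Unset Printing Implicit Defensive.
Import Order.TTheory GRing.Theory Num.Theory.

(* An l-matching on {1..n} (encoded as 'I_n) is an injection sigma : I -> 'I_n
   with I a subset of 'I_n of size l. We encode the pair (I, sigma) as a
   partial function f : 'I_n -> option 'I_n with domain I = {i | f i != None},
   injective on its domain. This is a bijective encoding of the pairs (I,sigma). *)
Definition pinj n := {ffun 'I_n -> option 'I_n}.

Definition dom n (f : pinj n) : {set 'I_n} := [set i | f i != None].

Definition is_matching n (l : nat) (f : pinj n) : bool :=
  (#|dom f| == l) &&
  [forall i, forall j, ((f i != None) && (f i == f j)) ==> (i == j)].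

Definition matchings n l : {set pinj n} := [set f | is_matching l f].

Definition nfix n (f : pinj n) : nat := #|[set i | f i == Some i]|.

Definition prob_fix (R : realType) n l k : R :=
  (#|[set f in matchings n l | nfix f == k]|%:R / #|matchings n l|%:R)%R.

(* Main.v *)
Require Import Defs.
From HB Require Import structures.
From mathcomp Require Import all_boot all_order all_algebra.
From mathcomp Require Import ring lra zify.
Import Order.TTheory GRing.Theory Num.Theory.

Set Implicit Arguments. Unset Strict Implicit. Unset Printing Implicit Defensive.

Definition pinjset (A B : finType) (r : nat) : {set {ffun A -> option B}} :=
  [set f : {ffun A -> option B} | (#|[set i | f i != None]| == r) &&
    [forall i, forall j, ((f i != None) && (f i == f j)) ==> (i == j)]].

Section Fiber.
Variables (A B : finType) (D : {set A}).

Definition hD (g : {ffun {x : A | x \in D} -> B}) : {ffun A -> option B} :=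
  [ffun a => if insub a is Some y then Some (g y) else None].

Lemma hD_inj : injective hD.
Proof.
move=> g1 g2 /ffunP E; apply/ffunP => y.
have := E (val y); rewrite !ffunE valK; by case.
Qed.

Lemma fiber_card :
  #|[set f : {ffun A -> option B} | ([set i | f i != None] == D) &&
    [forall i, forall j, ((f i != None) && (f i == f j)) ==> (i == j)]]|
  = #|B| ^_ #|D|.
Proof.
have -> : [set f : {ffun A -> option B} | ([set i | f i != None] == D) &&
    [forall i, forall j, ((f i != None) && (f i == f j)) ==> (i == j)]]
   = hD @: [set g : {ffun {x : A | x \in D} -> B} | injectiveb g].
  apply/setP => f; rewrite inE; apply/idP/imsetP.
  - case/andP => /eqP dD /forallP Hi.
    have fD a : (f a != None) = (a \in D) by rewrite -dD inE.
    have [D0 | [a0 aD]] := set_0Vmem D.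
    + have Hx : forall a, a \in D -> False by move=> a; rewrite D0 inE.
      have g : {ffun {x : A | x \in D} -> B}.
        by apply: finfun => -[y]; rewrite D0 inE.
      exists g.
        rewrite inE; apply/injectiveP => y; case: (Hx _ (valP y)).
      apply/ffunP => a; rewrite ffunE; case: insubP => [y _ _ | Ha].
        case: (Hx _ (valP y)).
      by move: Ha; rewrite -fD negbK => /eqP.
    + have : f a0 != None by rewrite fD.
      case Ef : (f a0) => [b0|] // _.
      exists [ffun y : {x : A | x \in D} => odflt b0 (f (val y))].
        rewrite inE; apply/injectiveP => y1 y2; rewrite !ffunE.
        have := valP y1; have := valP y2; rewrite -!fD.
        case E1 : (f (val y1)) => [b1|] //; case E2 : (f (val y2)) => [b2|] // _ _ /= Eb.
        apply: val_inj; apply/eqP.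
        have := Hi (val y1) => /forallP /(_ (val y2)); rewrite E1 E2 Eb eqxx /=.
        by [].
      apply/ffunP => a; rewrite !ffunE; case: insubP => [y Hy Ey | Ha].
        rewrite ffunE Ey; have := Hy; rewrite -fD; by case: (f a).
      by move: Ha; rewrite -fD negbK => /eqP.
  - case=> g; rewrite inE => /injectiveP ig ->.
    apply/andP; split.
      apply/eqP/setP => a; rewrite inE ffunE; case: insubP => [y -> _ | /negbTE ->] //.
    apply/forallP => i; apply/forallP => j; apply/implyP; rewrite !ffunE.
    case: insubP => [yi Hi Ei | _] //; case: insubP => [yj Hj Ej | _] //= /eqP [] /ig Eij.
    by rewrite -Ei -Ej Eij.
rewrite card_imset; last exact: hD_inj.
by rewrite card_inj_ffuns card_sig.
Qed.
End Fiber.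

Lemma card_pinjset (A B : finType) r :
  #|pinjset A B r| = 'C(#|A|, r) * #|B| ^_ r.
Proof.
rewrite -card_draws -sum1_card.
rewrite (partition_big (fun f : {ffun A -> option B} => [set i | f i != None])
  (fun D : {set A} => #|D| == r)) /=; last first.
  by move=> f; rewrite inE => /andP [].
rewrite -sum_nat_cond_const /= [in RHS]big_mkcond /=.
rewrite [in LHS]big_mkcond /=; apply: eq_bigr => D _.
case: eqP => // Dr.
rewrite -Dr -(fiber_card B D) -[RHS]sum1_card; apply: eq_bigl => f.
rewrite !inE; have [->|] := eqVneq [set i | f i != None] D; rewrite ?eqxx ?andbF ?andbT //.
Qed.


Section Fix.
Variables (n : nat) (S : {set 'I_n}).
Local Notation T' := {x : 'I_n | x \notin S}.

Definition h' (g : {ffun T' -> option T'}) : {ffun 'I_n -> option 'I_n} :=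
  [ffun x => if insub x is Some t then omap val (g t) else Some x].

Lemma obind_insubE (o : option 'I_n) (u : T') :
  obind (fun y => insub y : option T') o = Some u -> o = Some (val u).
Proof. by case: o => [y|] //=; case: insubP => [u' _ <- [<-] | _]. Qed.

Lemma h'_inj : injective h'.
Proof.
move=> g1 g2 /ffunP E; apply/ffunP => t.
have := E (val t); rewrite !ffunE valK.
case: (g1 t) => [a|]; case: (g2 t) => [b|] //= [] /val_inj -> //.
Qed.

Lemma dom_h' g :
  #|[set x | h' g x != None]| = #|S| + #|[set t | g t != None]|.
Proof.
have -> : [set x | h' g x != None] = S :|: [set val t | t in [set t | g t != None]].
  apply/setP => x; rewrite !inE ffunE; case: insubP => [t Ht Et | Hx].
    rewrite (negbTE Ht) /=; apply/idP/imsetP.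
      by move=> H; exists t; rewrite ?inE; case: (g t) H.
    case=> t'; rewrite inE => Ht' Ex; move: Et; rewrite Ex => /val_inj ->.
    by case: (g t') Ht'.
  by move: Hx; rewrite negbK => ->.
rewrite cardsU card_imset; last exact: val_inj.
suff -> : S :&: [set val t | t in [set t | g t != None]] = set0 by rewrite cards0 subn0.
apply/setP => x; rewrite !inE; apply/andP => -[xS /imsetP [t _ Ex]].
by move: (valP t); rewrite -Ex xS.
Qed.

Lemma fixcount (l : nat) : (#|S| <= l)%N ->
  #|[set f in pinjset 'I_n 'I_n l | S \subset [set i | f i == Some i]]|
   = 'C(n - #|S|, l - #|S|) * (n - #|S|) ^_ (l - #|S|).
Proof.
move=> Sl.
have cT : #|{: T'}| = n - #|S|.
  rewrite card_sig; have H := cardC S; rewrite card_ord in H.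
  have E : #|[pred x | x \notin S]| = #|[predC S]| by apply: eq_card.
  rewrite E; lia.
rewrite -cT -card_pinjset.
have -> : [set f in pinjset 'I_n 'I_n l | S \subset [set i | f i == Some i]]
   = h' @: pinjset T' T' (l - #|S|); last by rewrite card_imset //; exact: h'_inj.
apply/setP => f; rewrite !inE; apply/idP/imsetP.
- case/andP => /andP [/eqP Hd /forallP Hi] /subsetP Hs.
  have fS x : x \in S -> f x = Some x by move=> /Hs; rewrite inE => /eqP.
  have injf x y : f x != None -> f x = f y -> x = y.
    by move=> H E; have := Hi x => /forallP /(_ y); rewrite H E eqxx /= => /eqP.
  pose g := [ffun t : T' => obind (fun y => insub y : option T') (f (val t))].
  have hg : h' g = f.
    apply/ffunP => x; rewrite !ffunE; case: insubP => [t Ht Et | Hx].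
      rewrite ffunE Et; case Efx: (f x) => [y|] //=.
      case: insubP => [u Hu Eu | Hy] /=; first by rewrite Eu.
      move: Hy; rewrite negbK => yS; have := fS _ yS; rewrite -Efx => E.
      have := injf _ _ _ E; rewrite (fS _ yS) => /(_ isT) xy.
      by move: Ht; rewrite -xy yS.
    by move: Hx; rewrite negbK => /fS ->.
  exists g => //; rewrite inE; apply/andP; split.
    by rewrite -Hd -hg dom_h' addKn.
  apply/forallP => t1; apply/forallP => t2; apply/implyP => /andP [H1 /eqP E].
  move: H1 E; rewrite !ffunE; case Eg: (obind (fun y => insub y : option T') (f (val t1))) => [u|] // _ E.
  have E1 := obind_insubE Eg; have E2 := obind_insubE (esym E).
  apply/eqP/val_inj/(injf _ _); first by rewrite E1.
  by rewrite E1 E2.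
- case=> g; rewrite inE => /andP [/eqP Hd /forallP Hi] ->.
  apply/andP; split; last first.
    apply/subsetP => x xS; rewrite inE ffunE.
    by case: insubP => [t Ht _ | //]; rewrite xS in Ht.
  apply/andP; split; first by rewrite dom_h' Hd subnKC.
  apply/forallP => x; apply/forallP => y; apply/implyP; rewrite !ffunE.
  case: insubP => [tx Hx Ex | Hx]; case: insubP => [ty Hy Ey | Hy] /=.
  + case Egx: (g tx) => [a|] //; case Egy: (g ty) => [b|] //=; rewrite ?andTb => /eqP [ab].
    have := Hi tx => /forallP /(_ ty); rewrite Egx Egy (val_inj ab) eqxx /= => /eqP txy.
    by rewrite -Ex -Ey txy.
  + case Egx: (g tx) => [a|] //=; rewrite ?andTb => /eqP [ay].
    have := svalP a; rewrite /= ay; by move: Hy; rewrite negbK => ->.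
  + case Egy: (g ty) => [b|] //=; rewrite ?andTb => /eqP [xb].
    have := svalP b; rewrite /= -xb; by move: Hx; rewrite negbK => ->.
  + by rewrite ?andTb => /eqP [->].
Qed.
End Fix.

Lemma t (a b c d : nat) : a * b * (c * d) = b * (a * c) * d.
Proof. ring. Qed.
Lemma binmul m j k : k <= j -> 'C(j,k) * 'C(m,j) = 'C(m,k) * 'C(m-k, j-k).
Proof.
move=> kj; have [mj|jm] := ltnP m j.
  rewrite (bin_small mj) muln0; have [km|mk] := leqP k m.
    have h : m - k < j - k by lia.
    by rewrite (bin_small h) muln0.
  by rewrite (bin_small mk).
apply/eqP; rewrite -(@eqn_pmul2r (k`! * (j-k)`! * (m-j)`!)); last by rewrite !muln_gt0 !fact_gt0.
have e1 := bin_fact kj. have e2 := bin_fact jm. have e3 := @bin_fact (m-k) (j-k) ltac:(lia).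
have e4 : k <= m by lia. have e5 := bin_fact e4.
rewrite (_ : m - k - (j - k) = m - j) in e3; last lia.
have -> : 'C(j, k) * 'C(m, j) * (k`! * (j - k)`! * (m - j)`!) = 'C(m, j) * ('C(j, k) * (k`! * (j - k)`!)) * (m - j)`! by ring.
rewrite e1 -mulnA e2.
have -> : 'C(m, k) * 'C(m - k, j - k) * (k`! * (j - k)`! * (m - j)`!) = 'C(m, k) * (k`! * ('C(m - k, j - k) * ((j - k)`! * (m - j)`!))) by ring.
by rewrite e3 e5.
Qed.

Section RingPart.
Local Open Scope ring_scope.

Lemma sum_trunc (R : numFieldType) (F : nat -> R) (M N : nat) : (M <= N)%N ->
  (forall i, (M <= i)%N -> F i = 0) -> \sum_(i < N) F i = \sum_(i < M) F i.
Proof.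
move=> MN F0; rewrite (big_ord_widen _ _ MN) [RHS]big_mkcond; apply: eq_bigr => i _.
by case: ltnP => // ?; rewrite F0.
Qed.

Lemma sum_shift (R : numFieldType) (G : nat -> R) (k N : nat) :
  \sum_(j < N) (if (k <= j)%N then G (j - k)%N else 0) = \sum_(i < N - k) G i.
Proof.
have [kN|Nk] := leqP k N.
  rewrite -(big_mkord xpredT (fun j => if (k <= j)%N then G (j - k)%N else 0)) -(big_mkord xpredT G).
  rewrite (@big_cat_nat _ _ _ k 0 N) //= big_nat_cond big1 ?add0r; last first.
    by move=> i /andP [/andP [_ ik] _]; rewrite leqNgt ik.
  rewrite -{1}(add0n k) big_addn; apply: eq_bigr => i _; by rewrite leq_addl addnK.
rewrite (_ : (N - k)%N = 0%N); last lia.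
rewrite big_ord0 big1 // => i _; case: ifP => //; have := ltn_ord i; lia.
Qed.

Lemma alt_id (R : numFieldType) (m k N : nat) : (m < N)%N ->
  (m == k)%:R = \sum_(j < N) (if (k <= j)%N then (-1) ^+ (j - k) * ('C(j,k) * 'C(m,j))%:R else 0) :> R.
Proof.
move=> mN; have [mk|km] := ltnP m k.
  rewrite (_ : (m == k) = false); last lia.
  rewrite big1 // => j _; case: ifP => // kj; rewrite (@bin_small m j) ?muln0 ?mulr0 //; lia.
rewrite (eq_bigr (fun j : 'I_N => 'C(m,k)%:R * (if (k <= j)%N then (-1) ^+ (j - k) * 'C(m-k, j-k)%:R else 0))); last first.
  move=> j _; case: ifP => kj; rewrite ?mulr0 // binmul // natrM; ring.
rewrite -mulr_sumr (sum_shift (fun i => (-1) ^+ i * 'C(m-k, i)%:R)) (@sum_trunc _ (fun i => (-1) ^+ i * 'C(m-k, i)%:R) (m - k).+1); last 2 first.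
- lia.
- by move=> i hi; rewrite bin_small ?mulr0.
rewrite (eq_bigr (fun i : 'I_(m-k).+1 => (-1) ^+ i *+ 'C(m - k, i))); last first.
  by move=> i _; rewrite mulr_natr.
rewrite -exprD1n addNr expr0n.
have [->|mk] := eqVneq m k; first by rewrite subnn binn /= mulr1.
rewrite (_ : (m - k == 0)%N = false) ?mulr0 //; lia.
Qed.

End RingPart.


Lemma matchingsE n l : matchings n l = pinjset 'I_n 'I_n l.
Proof. by apply/setP => f; rewrite !inE. Qed.

Lemma card_matchings n l : #|matchings n l| = 'C(n,l) * n ^_ l.
Proof. by rewrite matchingsE card_pinjset card_ord. Qed.

Lemma fixcount' n l (S : {set 'I_n}) :
  #|[set f in matchings n l | S \subset [set i | f i == Some i]]| =
  if (#|S| <= l)%N then 'C(n - #|S|, l - #|S|) * (n - #|S|) ^_ (l - #|S|) else 0.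
Proof.
case: ifP => Sl; first by rewrite matchingsE fixcount.
apply: eq_card0 => f; rewrite !inE; apply/negP => /andP [/andP [/eqP Hd _] /subsetP Hs].
have : (#|S| <= #|[set i | f i != None]|)%N.
  apply: subset_leq_card; apply/subsetP => x /Hs; rewrite !inE => /eqP ->. by [].
by rewrite Hd Sl.
Qed.

Lemma card_sub_sum (T : finType) (F : {set T}) j :
  #|[set S : {set T} | S \subset F & #|S| == j]| = \sum_(S : {set T} | #|S| == j) (S \subset F : nat).
Proof.
rewrite -sum1_card big_mkcond [RHS]big_mkcond /=; apply: eq_bigr => S _.
by rewrite inE andbC; case: (#|S| == j); case: (S \subset F).
Qed.

Lemma sumC n l j : \sum_(f in matchings n l) 'C(nfix f, j) =
  'C(n, j) * (if (j <= l)%N then 'C(n-j, l-j) * (n-j) ^_ (l-j) else 0).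
Proof.
rewrite (eq_bigr (fun f : pinj n => \sum_(S : {set 'I_n} | #|S| == j) (S \subset [set i | f i == Some i] : nat))); last first.
  by move=> f _; rewrite /nfix -cards_draws card_sub_sum.
rewrite exchange_big /=.
rewrite (eq_bigr (fun S => if (j <= l)%N then 'C(n-j, l-j) * (n-j) ^_ (l-j) else 0)); last first.
  move=> S /eqP Sj; rewrite -Sj -fixcount' -sum1_card big_mkcond [RHS]big_mkcond /=.
  by apply: eq_bigr => f _; rewrite [in RHS]inE; case: (f \in matchings n l); case: (S \subset _).
rewrite big_const iter_addn_0 mulnC; have := card_draws 'I_n j; rewrite card_ord => <-; congr (_ * _); apply: eq_card => S; by rewrite inE.
Qed.

Section RingPart2.
Local Open Scope ring_scope.

Section Alg.
Variable R : numFieldType.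

Lemma fnz a : (a`!%:R : R) != 0.
Proof. by rewrite pnatr_eq0 -lt0n fact_gt0. Qed.

Lemma binR a b : (b <= a)%N -> ('C(a,b)%:R : R) = a`!%:R / (b`!%:R * (a-b)`!%:R).
Proof. by move=> h; rewrite -(bin_fact h) !natrM mulfK // mulf_neq0 ?fnz. Qed.

Lemma ffR a b : (b <= a)%N -> ((a ^_ b)%:R : R) = a`!%:R / (a-b)`!%:R.
Proof. by move=> h; rewrite -(ffact_fact h) natrM mulfK ?fnz. Qed.

Lemma term_eq n l k j : (l <= n)%N -> (k <= j)%N ->
  (-1) ^+ (j - k) * ('C(j,k) * ('C(n,j) * (if (j <= l)%N then 'C(n-j, l-j) * (n-j) ^_ (l-j) else 0)))%N%:R
   / ('C(n,l) * n ^_ l)%N%:R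
  = (k`!%:R)^-1 * ((-1) ^+ (j - k) / (j - k)`!%:R) * ((l ^_ j)%:R / (n ^_ j)%:R) :> R.
Proof.
move=> ln kj; case: leqP => jl; last by rewrite (ffact_small jl) !muln0 mulr0 !mul0r mulr0.
rewrite !natrM (binR kj) (binR (leq_trans jl ln)) (binR ln) (ffR ln) (ffR jl).
rewrite (ffR (leq_trans jl ln)).
have h1 : (l - j <= n - j)%N by lia.
rewrite (binR h1) (ffR h1) (_ : (n - j - (l - j) = n - l)%N); last lia.
by field; rewrite ?fnz ?mulf_neq0 ?fnz.
Qed.
End Alg.

Lemma num_formula (R : numFieldType) n l k :
  (#|[set f in matchings n l | nfix f == k]|%:R : R) =
  \sum_(j < n.+1) (if (k <= j)%N then (-1) ^+ (j - k) *
     ('C(j,k) * ('C(n,j) * (if (j <= l)%N then 'C(n-j, l-j) * (n-j) ^_ (l-j) else 0)))%N%:R else 0).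
Proof.
have -> : (#|[set f in matchings n l | nfix f == k]|%:R : R) = \sum_(f in matchings n l) (nfix f == k)%:R.
  rewrite -sum1_card natr_sum [LHS]big_mkcond [RHS]big_mkcond; apply: eq_bigr => f _.
  by rewrite inE; case: (f \in matchings n l); case: (nfix f == k).
rewrite (eq_bigr (fun f : pinj n => \sum_(j < n.+1) (if (k <= j)%N then (-1) ^+ (j - k) * ('C(j,k) * 'C(nfix f,j))%N%:R else 0))); last first.
  move=> f _; apply: alt_id; rewrite ltnS /nfix.
  by have := max_card [set i | f i == Some i]; rewrite card_ord.
rewrite exchange_big /=; apply: eq_bigr => j _; case: ifP => kj; last by rewrite big1.
by rewrite -mulr_sumr -natr_sum -big_distrr /= sumC.
Qed.

Lemma prob_formula (R : numFieldType) n l k : (l <= n)%N ->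
  (#|[set f in matchings n l | nfix f == k]|%:R / #|matchings n l|%:R : R) =
  \sum_(i < n.+1) (k`!%:R)^-1 * ((-1) ^+ i / i`!%:R) * ((l ^_ (i + k))%:R / (n ^_ (i + k))%:R).
Proof.
move=> ln; rewrite num_formula card_matchings mulr_suml.
pose G (i : nat) : R := (k`!%:R)^-1 * ((-1) ^+ i / i`!%:R) * ((l ^_ (i + k))%:R / (n ^_ (i + k))%:R).
rewrite (eq_bigr (fun j : 'I_n.+1 => if (k <= j)%N then G (j - k)%N else 0)); last first.
  move=> j _; case: ifP => kj; last by rewrite mul0r.
  by rewrite term_eq // /G subnK.
rewrite sum_shift (@sum_trunc _ G (n.+1 - k)) //; first lia.
move=> i hi; rewrite /G ffact_small ?mul0r ?mulr0 //; lia.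
Qed.

End RingPart2.
From mathcomp Require Import all_classical all_reals all_analysis.
Import numFieldNormedType.Exports.
Section AnaPart.
Local Open Scope classical_set_scope.
Local Open Scope ring_scope.

Section An.
Variable R : realType.

Lemma cvg_invn : (fun n : nat => (n%:R : R)^-1) @ \oo --> 0.
Proof.
apply/cvgrPdist_le => e e0; near=> n.
rewrite distrC subr0 ger0_norm ?invr_ge0 ?ler0n //.
have hn : e^-1 < n%:R by near: n; apply: nbhs_infty_gtr.
have n0 : 0 < (n%:R : R) by apply: lt_trans hn; rewrite invr_gt0.
by rewrite -lef_pV2 ?invrK ?ltW // posrE ?invr_gt0.
Unshelve. all: by end_near. Qed.

Lemma natr_ffact (m j : nat) : ((m ^_ j)%:R : R) = \prod_(i < j) (m%:R - i%:R).
Proof.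
elim: j => [|j IH]; first by rewrite big_ord0.
rewrite ffactnSr natrM IH big_ord_recr /=.
have [h|h] := leqP j m; first by rewrite natrB.
by rewrite -IH ffact_small // !mul0r.
Qed.

Variables (l : nat -> nat) (theta : R).
Hypothesis hl : (fun n : nat => ((l n)%:R / n%:R : R)) @ \oo --> theta.

Lemma factor_cvg (i : nat) :
  (fun n => ((l n)%:R - i%:R) / (n%:R - i%:R) : R) @ \oo --> theta.
Proof.
have E : {near \oo, (fun n => ((l n)%:R / n%:R - i%:R * n%:R^-1) / (1 - i%:R * n%:R^-1) : R)
   =1 (fun n => ((l n)%:R - i%:R) / (n%:R - i%:R))}.
  near=> n => /=.
  have hn : (i < n)%N by near: n; apply: nbhs_infty_gt.
  have n0 : (n%:R : R) != 0 by rewrite pnatr_eq0; lia.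
  have ni : (n%:R - i%:R : R) != 0 by rewrite -natrB ?pnatr_eq0; lia.
  have ni' : (1 - i%:R * n%:R^-1 : R) != 0.
    have -> : (1 - i%:R * n%:R^-1 : R) = (n%:R - i%:R) / n%:R by field.
    by rewrite mulf_neq0 ?invr_eq0.
  by field; rewrite ni n0.
apply: cvg_trans (near_eq_cvg E) _.
have -> : theta = (theta - i%:R * 0) / (1 - i%:R * 0) by rewrite !mulr0 !subr0 divr1.
apply: cvgM; first by apply: cvgB => //; apply: cvgMl_tmp; exact: cvg_invn.
apply: cvgV; first by rewrite mulr0 subr0 oner_neq0.
by apply: cvgB; [exact: cvg_cst | apply: cvgMl_tmp; exact: cvg_invn].
Unshelve. all: by end_near. Qed.

Lemma a_cvg (j : nat) :
  (fun n => ((l n) ^_ j)%:R / (n ^_ j)%:R : R) @ \oo --> theta ^+ j.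
Proof.
have E : (fun n => ((l n) ^_ j)%:R / (n ^_ j)%:R : R) =
  (fun n => \prod_(i < j) (((l n)%:R - i%:R) / (n%:R - i%:R))).
  by apply/funext => n; rewrite !natr_ffact prodf_div.
rewrite E; elim: j {E} => [|j IH].
  under eq_cvg do rewrite big_ord0; rewrite expr0; exact: cvg_cst.
under eq_cvg do rewrite big_ord_recr /=.
rewrite exprSr; apply: cvgM => //; exact: factor_cvg.
Qed.
End An.


Section Tan.
Variable R : realType.
Definition cc (i : nat) : R := (-1) ^+ i / i`!%:R.

Lemma exp_series_cvg (x : R) : series (exp_coeff x) @ \oo --> expR x.
Proof. exact: is_cvg_series_exp_coeff. Qed.

Lemma fact_geom N i : (1 <= N)%N -> (N`! * 2 ^ i <= (N + i)`!)%N.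
Proof.
move=> N1; elim: i => [|i IH]; first by rewrite addn0 muln1.
rewrite addnS factS expnS mulnCA; apply: leq_mul IH; lia.
Qed.

Lemma geom_sumE d : \sum_(i < d) (2^-1 : R) ^+ i = 2 - 2 * (2^-1) ^+ d.
Proof.
elim: d => [|d IH]; first by rewrite big_ord0 expr0 mulr1 subrr.
by rewrite big_ord_recr /= IH exprSr; field.
Qed.

Lemma inv_fact_le N i : (1 <= N)%N ->
  ((i + N)`!%:R : R)^-1 <= (N`!%:R)^-1 * (2^-1) ^+ i.
Proof.
move=> N1; rewrite exprVn -invfM lef_pV2 ?posrE ?mulr_gt0 ?exprn_gt0 ?ltr0n ?fact_gt0 //.
by rewrite -natrX -natrM ler_nat addnC fact_geom.
Qed.

Lemma tail_bound N M (z : nat -> R) : (1 <= N)%N -> (N <= M)%N -> (forall i, `|z i| <= 1) ->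
  `|\sum_(i < M) cc i * z i - \sum_(i < N) cc i * z i| <= 2 / N`!%:R.
Proof.
move=> N1 NM zb.
rewrite -(big_mkord xpredT (fun i => cc i * z i)) -(big_mkord xpredT (fun i => cc i * z i)).
rewrite (@big_cat_nat _ _ _ N 0 M) //= addrAC subrr add0r.
apply: le_trans (ler_norm_sum _ _ _) _.
apply: (@le_trans _ _ (\sum_(N <= i < M) (i`!%:R : R)^-1)).
  apply: ler_sum => i _; rewrite normrM /cc normrM normrX normrN1 expr1n mul1r.
  rewrite ger0_norm ?invr_ge0 ?ler0n // -[X in _ <= X]mulr1 ler_wpM2l ?invr_ge0 ?ler0n //.
rewrite -{1}(add0n N) big_addn.
apply: (@le_trans _ _ (\sum_(0 <= i < M - N) (N`!%:R : R)^-1 * (2^-1) ^+ i)).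
  by apply: ler_sum => i _; apply: inv_fact_le.
rewrite -mulr_sumr big_mkord geom_sumE mulrC ler_wpM2r ?invr_ge0 ?ler0n //.
rewrite lerBlDr lerDl mulr_ge0 // exprn_ge0 // invr_ge0; lra.
Qed.
End Tan.

Section Tan2.
Variable R : realType.

Lemma finsum_cvg (x : nat -> nat -> R) (y : nat -> R) N :
  (forall i, (fun n => x n i) @ \oo --> y i) ->
  (fun n => \sum_(i < N) cc R i * x n i) @ \oo --> \sum_(i < N) cc R i * y i.
Proof.
move=> hx; elim: N => [|N IH].
  under eq_cvg do rewrite big_ord0; rewrite big_ord0; exact: cvg_cst.
under eq_cvg do rewrite big_ord_recr /=; rewrite big_ord_recr /=.
apply: cvgD => //; apply: cvgMl_tmp; exact: hx.
Qed.

Lemma tannery (x : nat -> nat -> R) (y : nat -> R) (L : R) :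
  (forall n i, `|x n i| <= 1) -> (forall i, (fun n => x n i) @ \oo --> y i) ->
  (fun N => \sum_(i < N) cc R i * y i) @ \oo --> L ->
  (fun n => \sum_(i < n.+1) cc R i * x n i) @ \oo --> L.
Proof.
move=> xb hx hy; apply/cvgrPdist_lt => e e0.
have e3 : 0 < e / 3 by rewrite divr_gt0.
have H1 : \forall N \near \oo, [/\ (2 / N`!%:R : R) < e / 3, `|L - \sum_(i < N) cc R i * y i| < e / 3 & (1 <= N)%N].
  near=> N; split.
  - have hN : 6 / e < N%:R by near: N; apply: nbhs_infty_gtr.
    have N0 : (0 : R) < N%:R by apply: lt_trans hN; rewrite divr_gt0.
    have hf : (N%:R : R) <= N`!%:R by rewrite ler_nat fact_geq.
    apply: (@le_lt_trans _ _ (2 / N%:R)).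
      by rewrite ler_pM2l // lef_pV2 ?posrE // (lt_le_trans N0).
    rewrite ltr_pdivrMr // -ltr_pdivrMl //.
    have -> : (e/3)^-1 * 2 = 6 / e by field; rewrite gt_eqF.
    exact: hN.
  - near: N. by move: hy => /cvgr_dist_lt /(_ _ e3).
  - by near: N; apply: nbhs_infty_gt.
case: H1 => N0 _ HN; case: (HN N0 (leqnn _)) => hb hL N1.
have := @finsum_cvg x y N0 hx. move=> /cvgr_dist_lt /(_ _ e3) H2.
near=> n.
have Hn : `|\sum_(i < N0) cc R i * y i - \sum_(i < N0) cc R i * x n i| < e / 3 by near: n; exact: H2.
have nN : (N0 <= n.+1)%N by apply: leqW; near: n; apply: nbhs_infty_ge.
have Ht := @tail_bound R N0 n.+1 (x n) N1 nN (xb n).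
set A := \sum_(i < N0) cc R i * y i in hL Hn.
set B := \sum_(i < N0) cc R i * x n i in Hn Ht.
set C := \sum_(i < n.+1) cc R i * x n i in Ht *.
have -> : L - C = (L - A) + (A - B) + (B - C) by ring.
apply: (@le_lt_trans _ _ (`|L - A| + `|A - B| + `|B - C|)).
  by apply: le_trans (ler_normD _ _) _; rewrite lerD2r ler_normD.
have : `|B - C| <= 2 / N0`!%:R by rewrite distrC.
lra.
Unshelve. all: by end_near. Qed.
End Tan2.

End AnaPart.

Section Final.
Local Open Scope classical_set_scope.
Local Open Scope ring_scope.

Lemma a_bound (R : realType) m n j : (m <= n)%N -> `|((m ^_ j)%:R / (n ^_ j)%:R : R)| <= 1.
Proof.
move=> mn; have hle : (m ^_ j <= n ^_ j)%N.
  by rewrite !ffact_prod; apply: leq_prod => i _; apply: leq_sub2r.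
rewrite ger0_norm ?divr_ge0 ?ler0n //.
have [E0|n0] := eqVneq (n ^_ j) 0%N.
  by move: hle; rewrite E0 leqn0 => /eqP ->; rewrite mul0r.
rewrite ler_pdivrMr ?mul1r ?ler_nat // ltr0n lt0n //.
Qed.

Lemma final_cvg (R : realType) (l : nat -> nat) (theta : R) :
  (forall n, (l n <= n)%N) ->
  (fun n : nat => ((l n)%:R / n%:R : R)) @ \oo --> theta ->
  forall k : nat,
    (fun n : nat => prob_fix R n (l n) k) @ \oo -->
      expR (- theta) * theta ^+ k / (k`!)%:R.
Proof.
move=> hln hl k.
have E : (fun n => prob_fix R n (l n) k) =
   (fun n => (k`!%:R)^-1 * \sum_(i < n.+1) cc R i * (((l n) ^_ (i + k))%:R / (n ^_ (i + k))%:R)).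
  apply/funext => n; rewrite /prob_fix prob_formula // mulr_sumr; apply: eq_bigr => i _.
  by rewrite /cc !mulrA.
rewrite E (_ : expR (- theta) * theta ^+ k / (k`!)%:R = (k`!%:R)^-1 * (theta ^+ k * expR (- theta))); last first.
  by ring.
apply: cvgMl_tmp.
apply: (@tannery R (fun n i => ((l n) ^_ (i + k))%:R / (n ^_ (i + k))%:R) (fun i => theta ^+ (i + k))).
- by move=> n i; apply: a_bound.
- by move=> i; apply: a_cvg.
- have -> : (fun N => \sum_(i < N) cc R i * theta ^+ (i + k)) =
            (fun N => theta ^+ k * series (exp_coeff (- theta)) N).
    apply/funext => N; rewrite /series /= big_mkord mulr_sumr; apply: eq_bigr => i _.
    rewrite /cc /exp_coeff /= exprD [(- theta) ^+ _]exprNn.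
    set a := (-1) ^+ i; set b := theta ^+ i; set c := theta ^+ k; ring.
  apply: cvgMl_tmp; exact: exp_series_cvg.
Qed.
End Final.

Unset Implicit Arguments.
Local Open Scope ring_scope.
Local Open Scope classical_set_scope.

Theorem mainTheorem9 (R : realType) (l : nat -> nat) (theta : R) :
  (forall n, (l n <= n)%N) ->
  0 <= theta <= 1 ->
  (fun n : nat => ((l n)%:R / n%:R : R)) @ \oo --> theta ->
  forall k : nat,
    (fun n : nat => prob_fix R n (l n) k) @ \oo -->
      expR (- theta) * theta ^+ k / (k`!)%:R.
Proof.
move=> hln _ hl k; exact: final_cvg.
Qed.
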